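(* Let $d\ge 1$ be an integer and let $m=d^d\cdot d^3$. Then $HG(B_{d,m})\ge q$, where $q=d^d/d^2=d^{d-2}$.
   Context: The book graph $B_{d,m}$ is obtained from a complete graph on $d$ vertices (the central clique) by adding an independent set of $m$ new vertices (the outer vertices) and joining each of them to all $d$ vertices of the central clique. The hat guessing game on a finite simple graph $G$ with $q$ colors: each vertex (player) is assigned a hat whose color is an arbitrary element of a fixed set $Q$ of $q$ colors. Each player sees the hat colors of exactly its neighbors in $G$ (not its own). Before the colors are assigned, the players fix a deterministic guessing strategy: for each vertex $w$, a function from the colorings of the neighbors of $w$ to $Q$, which is $w$'s guess for its own color. No communication is allowed. The strategy is winning if for every assignment of colors from $Q$ to all vertices, at least one vertex guesses its own color correctly. The hat guessing number $HG(G)$ is the largest integer $q$ for which a winning strategy with $q$ colors exists. *)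

(* Defs.v *)
From mathcomp Require Import all_boot.
Set Implicit Arguments. Unset Strict Implicit. Unset Printing Implicit Defensive.

Definition sees_only_neighbours (T : finType) (adj : rel T) (q : nat)
    (f : T -> (T -> 'I_q) -> 'I_q) : Prop :=
  forall (v : T) (c c' : T -> 'I_q),
    (forall u, adj v u -> c u = c' u) -> f v c = f v c'.

Definition winning_strategy (T : finType) (adj : rel T) (q : nat)
    (f : T -> (T -> 'I_q) -> 'I_q) : Prop :=
  sees_only_neighbours adj f /\
  forall c : T -> 'I_q, exists v : T, f v c = c v.

Definition hat_winnable (T : finType) (adj : rel T) (q : nat) : Prop :=
  exists f : T -> (T -> 'I_q) -> 'I_q, winning_strategy adj f.

Definition HG_ge (T : finType) (adj : rel T) (q : nat) : Prop :=
  exists q', q <= q' /\ hat_winnable adj q'.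

(* Book graph B_{d,m}: vertices inl i (central clique, i < d) and
   inr j (outer vertices, j < m). *)
Definition book_adj (d m : nat) : rel ('I_d + 'I_m)%type :=
  fun x y =>
    match x, y with
    | inl i, inl j => i != j
    | inl _, inr _ => true
    | inr _, inl _ => true
    | inr _, inr _ => false
    end.

Arguments book_adj d m : clear implicits.

(* Main.v *)
Require Import Defs.
From mathcomp Require Import all_boot.
From mathcomp Require Import all_order all_algebra zify lra ring.
From Stdlib Require Import ClassicalEpsilon.
Set Implicit Arguments. Unset Strict Implicit. Unset Printing Implicit Defensive.

Section HallS.
Variables (X Y : finType) (y0 : Y).

Definition nbh (N : X -> {set Y}) (B : {set X}) := \bigcup_(x in B) N x.

Lemma hall_gen k : forall (N : X -> {set Y}) (A : {set X}), #|A| <= k ->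
  (forall B : {set X}, B \subset A -> #|B| <= #|nbh N B|) ->
  exists f : X -> Y, {in A &, injective f} /\ {in A, forall x, f x \in N x}.
Proof.
elim: k => [|k IH] N A hA hH.
  exists (fun _ => y0); split.
    by move=> x x'; move: hA; rewrite leqn0 => /eqP/cards0_eq ->; rewrite inE.
  by move=> x; move: hA; rewrite leqn0 => /eqP/cards0_eq ->; rewrite inE.
case: (boolP [exists B : {set X}, [&& B != set0, B \proper A & #|nbh N B| <= #|B|]]).
- case/existsP=> B1 /and3P [B1n0 B1A B1t].
  have sB1A : B1 \subset A by case/andP: B1A.
  have [f1 [f1i f1N]] : exists f : X -> Y, {in B1 &, injective f} /\ {in B1, forall x, f x \in N x}.
    apply: (IH N B1).
      by rewrite -ltnS; apply: leq_trans hA; apply: proper_card.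
    by move=> B sB; apply: hH; apply: subset_trans sB sB1A.
  pose N2 := fun x => N x :\: nbh N B1.
  have [f2 [f2i f2N]] : exists f : X -> Y, {in A :\: B1 &, injective f} /\ {in A :\: B1, forall x, f x \in N2 x}.
    apply: (IH N2 (A :\: B1)).
      rewrite -ltnS; apply: leq_trans hA; rewrite cardsD (setIidPr sB1A).
      have : 0 < #|B1| by rewrite card_gt0.
      have : #|B1| <= #|A| by apply: subset_leq_card.
      lia.
    move=> C sC.
    have sCA : C :|: B1 \subset A by rewrite subUset sB1A andbT; apply: subset_trans sC (subsetDl _ _).
    have dis : [disjoint C & B1].
      rewrite -setI_eq0; apply/eqP/setP => x; rewrite !inE.
      apply/negP => /andP [xC xB]; move/subsetP: sC => /(_ x xC); by rewrite inE xB.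
    have h1 := hH _ sCA.
    have eU : nbh N (C :|: B1) = nbh N C :|: nbh N B1 by rewrite /nbh bigcup_setU.
    have sub : nbh N C :\: nbh N B1 \subset nbh N2 C.
      apply/subsetP => y; rewrite inE => /andP [yn /bigcupP [x xC yx]].
      by apply/bigcupP; exists x => //; rewrite inE yn.
    apply: leq_trans (subset_leq_card sub).
    move: h1; rewrite eU (cardsU (nbh N C)).
    rewrite (cardsU C B1) (disjoint_setI0 dis) cards0 subn0.
    have : #|nbh N B1| <= #|B1| := B1t.
    rewrite cardsD.
    set a := #|nbh N C|; set b := #|nbh N B1|; set c := #|nbh N C :&: nbh N B1|.
    have : c <= b by apply: subset_leq_card; apply: subsetIr.
    have : c <= a by apply: subset_leq_card; apply: subsetIl.
    move=> ca cb bB h.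
    have : #|C| + #|B1| <= a + b - c := h.
    move=> h'. 
    have e : a + b - c = (a - c) + b by rewrite addnC -addnBA // addnC.
    rewrite e in h'.
    rewrite -(leq_add2r #|B1|); apply: leq_trans h' _; by rewrite leq_add2l.
  exists (fun x => if x \in B1 then f1 x else f2 x); split.
    move=> x x' xA x'A /=.
    case: ifP => xB; case: ifP => x'B.
    + by apply: f1i.
    + move=> e; have : f1 x \in nbh N B1 by apply/bigcupP; exists x => //; apply: f1N.
      have : f2 x' \in N2 x' by apply: f2N; rewrite inE x'B x'A.
      by rewrite inE e => /andP [/negP].
    + move=> e; have : f1 x' \in nbh N B1 by apply/bigcupP; exists x' => //; apply: f1N.
      have : f2 x \in N2 x by apply: f2N; rewrite inE xB xA.
      by rewrite inE e => /andP [/negP].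
    + by apply: f2i; rewrite inE ?xB ?x'B ?xA ?x'A.
  move=> x xA /=; case: ifP => xB; first by apply: f1N.
  have : f2 x \in N2 x by apply: f2N; rewrite inE xB xA.
  by rewrite inE => /andP [].
- move=> nT.
  case: (set_0Vmem A) => [A0|[x0 x0A]].
    exists (fun _ => y0); split; by move=> x; rewrite A0 inE.
  have hx0 : 0 < #|N x0|.
    have := hH [set x0]; rewrite sub1set x0A cards1 /nbh big_set1; by apply.
  case/card_gt0P: hx0 => y1 y1N.
  pose N' := fun x => N x :\ y1.
  have [f' [f'i f'N]] : exists f : X -> Y, {in A :\ x0 &, injective f} /\ {in A :\ x0, forall x, f x \in N' x}.
    apply: (IH N' (A :\ x0)).
      by rewrite -ltnS; apply: leq_trans hA; rewrite (cardsD1 x0 A) x0A.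
    move=> B sB.
    case: (set_0Vmem B) => [->|[b bB]]; first by rewrite cards0.
    have sBA : B \subset A by apply: subset_trans sB (subsetDl _ _).
    have pBA : B \proper A.
      apply/properP; split => //; exists x0 => //.
      by apply/negP => /(subsetP sB); rewrite !inE eqxx.
    have : ~~ [&& B != set0, B \proper A & #|nbh N B| <= #|B|].
      by apply/negP => h; move/negP: nT; apply; apply/existsP; exists B.
    have Bn0 : B != set0 by apply/set0Pn; exists b.
    rewrite Bn0 pBA /= -ltnNge => lt.
    have sub : nbh N B :\ y1 \subset nbh N' B.
      apply/subsetP => y; rewrite inE => /andP [yn /bigcupP [x xB yx]].
      by apply/bigcupP; exists x => //; rewrite inE yn.
    apply: leq_trans (subset_leq_card sub).
    move: lt; rewrite (cardsD1 y1 (nbh N B)).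
    by case: (y1 \in nbh N B) => /=; lia.
  exists (fun x => if x == x0 then y1 else f' x); split.
    move=> x x' xA x'A /=.
    case: eqP => [->|nx]; case: eqP => [->|nx'] //.
    + move=> e; have : f' x' \in N' x' by apply: f'N; rewrite !inE; apply/andP; split=> //; apply/eqP.
      by rewrite !inE -e eqxx.
    + move=> e; have : f' x \in N' x by apply: f'N; rewrite !inE; apply/andP; split=> //; apply/eqP.
      by rewrite !inE e eqxx.
    + by apply: f'i; rewrite !inE; apply/andP; split=> //; apply/eqP.
  move=> x xA /=; case: eqP => [->//|nx].
  have : f' x \in N' x by apply: f'N; rewrite !inE; apply/andP; split=> //; apply/eqP.
  by rewrite inE => /andP [].
Qed.

End HallS.
Module AlgM.
Import Order.TTheory GRing.Theory Num.Theory.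
Local Open Scope ring_scope.

Lemma bernoulli (x : rat) (n : nat) : -1 <= x -> 1 + n%:R * x <= (1 + x) ^+ n.
Proof.
move=> hx; elim: n => [|n IH]; first by rewrite mul0r addr0 expr0.
rewrite exprSr.
have h1 : 0 <= 1 + x by lra.
apply: le_trans (ler_wpM2r h1 IH).
have hn : 0 <= n%:R :> rat by apply: ler0n.
rewrite -natr1; nra.
Qed.

Lemma amgm (e : nat) (a b : rat) : 0 <= a -> 0 <= b ->
  (e.+1)%:R ^+ e.+1 * a * b ^+ e <= (a + e%:R * b) ^+ e.+1.
Proof.
move=> ha hb.
have [b0|bp] := eqVneq b 0.
  rewrite b0 mulr0 addr0; case: e => [|e].
    by rewrite !expr1 expr0 mulr1 mul1r.
  rewrite expr0n /= mulr0; apply: exprn_ge0 => //.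
have bpos : 0 < b by rewrite lt_def bp hb.
set c : rat := (e.+1)%:R.
have cpos : 0 < c by rewrite /c ltr0n.
set x := (a / b - 1) / c.
have hx : -1 <= x.
  rewrite /x ler_pdivlMr // mulN1r.
  have : 0 <= a / b by apply: divr_ge0.
  have : 1 <= c by rewrite /c ler1n.
  lra.
have e1 : a = b * (1 + c * x).
  rewrite /x /c -natr1; field; rewrite bp andbT; move: cpos; rewrite /c -natr1 addrC => cpos; exact: lt0r_neq0.
have e2 : a + e%:R * b = b * c * (1 + x).
  rewrite /x /c -natr1; field; rewrite bp andbT; move: cpos; rewrite /c -natr1 addrC => cpos; exact: lt0r_neq0.
rewrite e2 e1 !exprMn.
have hB := bernoulli e.+1 hx.
rewrite -/c in hB.
have h3 : 0 <= b ^+ e.+1 * c ^+ e.+1 by apply: mulr_ge0; apply: exprn_ge0 => //; apply: ltW.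
apply: le_trans (ler_wpM2l h3 hB).
rewrite exprS le_eqVlt; apply/orP; left; apply/eqP; rewrite exprS; ring.
Qed.

Lemma two_term (k : nat) (a1 a2 b1 b2 p : rat) :
  0 <= a1 -> 0 <= a2 -> 0 <= b1 -> 0 <= b2 -> 0 <= p ->
  b1 ^+ k.+1 <= a1 ^+ k.+1 * p -> b2 ^+ k.+1 <= a2 ^+ k.+1 * p ->
  (b1 + b2) ^+ k.+1 <= (a1 + a2) ^+ k.+1 * p.
Proof.
have zero : forall a b : rat, 0 <= b -> a = 0 -> b ^+ k.+1 <= a ^+ k.+1 * p -> b = 0.
  move=> a b hb -> h; rewrite expr0n /= mul0r in h.
  have : b ^+ k.+1 = 0 by apply/eqP; rewrite eq_le h exprn_ge0.
  by move/eqP; rewrite expf_eq0 /= => /eqP.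
wlog: a1 a2 b1 b2 / b1 * a2 <= b2 * a1.
  move=> W ha1 ha2 hb1 hb2 hp h1 h2.
  have [le|lt] := lerP (b1 * a2) (b2 * a1); first by apply: W.
  rewrite (addrC b1) (addrC a1); apply: W => //; exact: ltW.
move=> hle ha1 ha2 hb1 hb2 hp h1 h2.
have [a20|a2n] := eqVneq a2 0.
  have -> : b2 = 0 by apply: (zero a2).
  by rewrite a20 !addr0.
have a2p : 0 < a2 by rewrite lt_def a2n ha2.
set r := b2 / a2.
have hr : 0 <= r by apply: divr_ge0.
have hb1r : b1 <= r * a1.
  rewrite /r mulrAC ler_pdivlMr //.
have hb2r : b2 = r * a2 by rewrite /r divfK //.
have hs : b1 + b2 <= r * (a1 + a2) by rewrite mulrDr; lra.
have hrk : r ^+ k.+1 <= p.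
  rewrite /r expr_div_n ler_pdivrMr; last by apply: exprn_gt0.
  by rewrite mulrC.
have h0 : 0 <= b1 + b2 by lra.
apply: le_trans (lerXn2r k.+1 _ _ hs) _.
- by rewrite nnegrE.
- by rewrite nnegrE; apply: mulr_ge0 => //; lra.
rewrite exprMn mulrC; apply: ler_wpM2l; first by apply: exprn_ge0; lra.
exact: hrk.
Qed.

Lemma alg_step (e : nat) (I : finType) (n s : I -> nat) (p : nat) :
  (forall v, (e.+1 * n v) ^ e.+1 <= s v ^ e.+1 * p)%N ->
  ((e.+2) ^ e.+2 * (\sum_v n v) ^ e.+1 <= (p + \sum_v s v) ^ e.+2)%N.
Proof.
move=> hv.
have hA : ((e.+1 * \sum_v n v) ^ e.+1 <= (\sum_v s v) ^ e.+1 * p)%N.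
  apply: (big_ind2 (fun x1 x2 => (e.+1 * x1) ^ e.+1 <= x2 ^ e.+1 * p)%N).
  - by rewrite muln0 exp0n.
  - move=> x1 x2 y1 y2 h1 h2.
    rewrite -(ler_nat rat) !natrX !natrM !natrD ?natrM ?mulrDr natrX natrD.
    move: h1 h2; rewrite -!(ler_nat rat) !natrX !natrM natrX => h1; rewrite natrX => h2.
    apply: two_term => //; rewrite ?mulr_ge0 //.
  - by move=> i _; apply: hv.
move: hA; set N := \sum_v n v; set S := \sum_v s v => hA.
rewrite -(ler_nat rat) natrM (natrX _ e.+2 e.+2) (natrX _ N) (natrX _ (p + S)) natrD.
move: hA; rewrite -(ler_nat rat) natrM (natrX _ (e.+1 * N)) natrM (natrX _ S) => hA.
have c1 : 0 < (e.+1)%:R :> rat by rewrite ltr0n.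
have hS : 0 <= S%:R / (e.+1)%:R :> rat by apply: divr_ge0; apply: ler0n.
have H := amgm (e.+1) (ler0n rat p) hS.
have -> : p%:R + S%:R = p%:R + (e.+1)%:R * (S%:R / (e.+1)%:R) :> rat.
  by rewrite mulrC divfK // lt0r_neq0.
apply: le_trans H; rewrite -mulrA; apply: ler_wpM2l; first by apply: exprn_ge0; apply: ler0n.
rewrite expr_div_n mulrA ler_pdivlMr; last by apply: exprn_gt0.
by rewrite mulrC -exprMn (mulrC p%:R).
Qed.

End AlgM.

Lemma card_part (T I : finType) (B : {set T}) (f : T -> I) :
  #|B| = \sum_i #|[set z in B | f z == i]|.
Proof.
rewrite -sum1_card (partition_big f predT) //=; apply: eq_bigr => i _.
by rewrite -sum1_card; apply: eq_bigl => z; rewrite inE.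
Qed.

Lemma sum_card_le (T I : finType) (B : {set T}) (f : T -> I) (A : I -> {set T}) :
  (forall i, A i \subset [set z in B | f z == i]) -> \sum_i #|A i| <= #|B|.
Proof.
move=> h; rewrite (card_part B f); apply: leq_sum => i _; exact: subset_leq_card.
Qed.

Section Iso.
Variables d q : nat.
Definition pr (i : 'I_d) (x : {ffun 'I_d -> 'I_q}) : {ffun 'I_d -> option 'I_q} :=
  [ffun k => if k == i then None else Some (x k)].
Definition sJ (J : {set 'I_d}) (U : {set {ffun 'I_d -> 'I_q}}) :=
  \sum_(i in J) #|pr i @: U|.

Lemma iso k : forall (J : {set 'I_d}) (U : {set {ffun 'I_d -> 'I_q}}),
  #|J| = k.+1 -> U != set0 -> (k.+1) ^ (k.+1) * #|U| ^ k <= (sJ J U) ^ (k.+1).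
Proof.
elim: k => [|k IH] J U hJ hU.
  rewrite !expn1 expn0 muln1.
  have : 0 < #|J| by rewrite hJ.
  case/card_gt0P => i0 i0J.
  rewrite /sJ (bigD1 i0) //=.
  apply: leq_trans (leq_addr _ _).
  by rewrite card_gt0 imset_eq0.
have : 0 < #|J| by rewrite hJ.
case/card_gt0P => i0 i0J.
case/set0Pn: hU => x0 x0U.
set J' := J :\ i0.
have hJ' : #|J'| = k.+1 by move: hJ; rewrite (cardsD1 i0) i0J => -[].
pose Uv (v : 'I_q) := [set x in U | x i0 == v].
pose p := #|pr i0 @: U|.
have np : forall v, #|Uv v| <= p.
  move=> v; rewrite -(card_in_imset (f := pr i0)).
    by apply: subset_leq_card; apply: imsetS; apply/subsetP => x; rewrite inE => /andP [].
  move=> x y; rewrite !inE => /andP [_ /eqP xv] /andP [_ /eqP yv] e.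
  apply/ffunP => j; case: (eqVneq j i0) => [->|nj]; first by rewrite xv yv.
  by move/ffunP: e => /(_ j); rewrite !ffunE (negbTE nj) => -[].
have hv : forall v, (k.+1 * #|Uv v|) ^ k.+1 <= (sJ J' (Uv v)) ^ k.+1 * p.
  move=> v; case: (eqVneq (Uv v) set0) => [->|ne].
    by rewrite cards0 muln0 exp0n.
  have h := IH J' (Uv v) hJ' ne.
  rewrite expnMn (expnSr #|Uv v|) mulnA.
  apply: leq_trans (leq_mul h (np v)); by rewrite leq_mul2l leqnn orbT.
have H := AlgM.alg_step hv.
have e1 : \sum_v #|Uv v| = #|U| by rewrite (card_part U (fun x => x i0)).
rewrite e1 in H.
apply: leq_trans H _; rewrite leq_exp2r //.
rewrite /sJ (bigD1 i0) //= leq_add2l.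
rewrite (exchange_big) /=.
have eJ : forall F, \sum_(i in J') F i = \sum_(i in J | i != i0) F i.
  by move=> F; apply: eq_bigl => i; rewrite /J' !inE andbC.
rewrite eJ; apply: leq_sum => i /andP [iJ ni].
apply: (@sum_card_le _ _ (pr i @: U) (fun z => odflt (x0 i0) (z i0)) (fun v => pr i @: Uv v)) => v.
apply/subsetP => z /imsetP [x xUv ->]; move: xUv; rewrite /Uv !inE => /andP [xU /eqP xv].
apply/andP; split; first by apply: imset_f.
have ni' : (i0 == i) = false by rewrite eq_sym (negbTE ni).
by rewrite ffunE ni' /= xv.
Qed.

End Iso.

Lemma iso_full (d q : nat) (U : {set {ffun 'I_d -> 'I_q}}) : 0 < d -> #|U| <= d ^ d ->
  #|U| <= sJ setT U.
Proof.
case: d U => [//|e] U _ hU.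
case: (eqVneq U set0) => [->|ne]; first by rewrite cards0.
have hc : #|[set: 'I_e.+1]| = e.+1 by rewrite cardsT card_ord.
have h := @iso e.+1 q e setT U hc ne.
rewrite leqNgt; apply/negP => lt.
have h2 : sJ [set: 'I_e.+1] U ^ e.+1 < #|U| ^ e.+1 by rewrite ltn_exp2r.
have h3 := leq_ltn_trans h h2.
rewrite (expnSr #|U|) (mulnC (_ ^ _)) ltn_pmul2l in h3; last by rewrite expn_gt0 card_gt0 ne.
by move: hU; rewrite leqNgt h3.
Qed.

Lemma foldr_prod (s : seq nat) : foldr muln 1 s = \prod_(i <- s) i.
Proof. by elim: s => [|a s IH] /=; rewrite ?big_nil ?big_cons ?IH. Qed.

Lemma card_fam (aT rT : finType) (F : aT -> pred rT) :
  #|family F| = \prod_x #|F x|.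
Proof. by rewrite card_family foldr_prod big_map big_enum. Qed.

Lemma card_bigcup_le (T I : finType) (P : pred I) (F : I -> {set T}) :
  #|\bigcup_(i | P i) F i| <= \sum_(i | P i) #|F i|.
Proof.
apply: (big_ind2 (fun (A : {set T}) n => #|A| <= n)) => //; first by rewrite cards0.
move=> A1 n1 A2 n2 h1 h2; rewrite cardsU; apply: leq_trans (leq_subr _ _) _.
exact: leq_add.
Qed.

Section Count.
Variables (P : finType) (q m K : nat).
Hypothesis q0 : 0 < q.

Definition goodf (B : {set P}) (c : 'I_q) :=
  [set g : {ffun P -> 'I_q} | [forall x in B, g x != c]].

Lemma card_goodf B c : #|goodf B c| = q.-1 ^ #|B| * q ^ (#|P| - #|B|).
Proof.
have -> : #|goodf B c| = #|family (fun x => if x \in B then predC1 c else predT)|.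
  apply: eq_card => g; rewrite !inE; apply/forallP/familyP => h x.
    by have := h x; case: (x \in B) => //=; rewrite inE.
  by apply/implyP => xB; have := h x; rewrite xB inE.
rewrite card_fam (bigID (mem B)) /=.
rewrite (eq_bigr (fun _ => q.-1)); last by move=> x xB; rewrite xB cardC1 card_ord.
rewrite [X in _ * X](eq_bigr (fun _ => q)); last by move=> x xB; rewrite (negbTE xB) card_ord.
rewrite !prod_nat_const; congr (_ * _ ^ _).
by rewrite -(cardC (mem B)) addKn.
Qed.

Definition badf (B : {set P}) (cc : {ffun 'I_m -> 'I_q}) :=
  [set G : {ffun 'I_m -> {ffun P -> 'I_q}} | [forall j, G j \in goodf B (cc j)]].

Lemma card_badf B cc : #|badf B cc| = (q.-1 ^ #|B| * q ^ (#|P| - #|B|)) ^ m.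
Proof.
have -> : #|badf B cc| = #|family (fun j => mem (goodf B (cc j)))|.
  apply: eq_card => G; rewrite !inE; apply/forallP/familyP => h j; exact: h.
rewrite card_fam (eq_bigr (fun _ => q.-1 ^ #|B| * q ^ (#|P| - #|B|))).
  by rewrite prod_nat_const card_ord.
by move=> j _; rewrite card_goodf.
Qed.

Lemma count_family :
  'C(#|P|, K) * q ^ m * q.-1 ^ (K * m) < q ^ (K * m) ->
  exists G : 'I_m -> P -> 'I_q, forall B : {set P}, #|B| = K ->
    exists j, forall c, exists2 x, x \in B & G j x = c.
Proof.
move=> hyp.
pose bad := \bigcup_(B : {set P} | #|B| == K) \bigcup_(cc : {ffun 'I_m -> 'I_q}) badf B cc.
have hcard : #|bad| < #|{ffun 'I_m -> {ffun P -> 'I_q}}|.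
  apply: (leq_ltn_trans (card_bigcup_le _ _)).
  apply: (@leq_ltn_trans (\sum_(B : {set P} | #|B| == K) q ^ m * (q.-1 ^ K * q ^ (#|P| - K)) ^ m)).
    apply: leq_sum => B /eqP hB; apply: leq_trans (card_bigcup_le _ _) _.
    rewrite (eq_bigr (fun _ => (q.-1 ^ K * q ^ (#|P| - K)) ^ m)); last by move=> cc _; rewrite card_badf hB.
    by rewrite sum_nat_const card_ffun !card_ord.
  rewrite sum_nat_const.
  rewrite (@eq_card _ _ [set B : {set P} | #|B| == K]) ?card_draws; last by move=> B; rewrite inE.
  rewrite !card_ffun !card_ord.
  case: (leqP K #|P|) => hK; last by rewrite bin_small // !mul0n !expn_gt0 q0.
  have e1 : (q.-1 ^ K * q ^ (#|P| - K)) ^ m = q.-1 ^ (K * m) * q ^ ((#|P| - K) * m).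
    by rewrite expnMn -!expnM.
  have e2 : #|P| * m = K * m + (#|P| - K) * m by rewrite -mulnDl subnKC.
  rewrite e1 -expnM e2 expnD !mulnA ltn_pmul2r; last by rewrite expn_gt0 q0.
  exact: hyp.
have : 0 < #|~: bad| by move: hcard; rewrite -(cardsC bad); lia.
case/card_gt0P => G; rewrite inE => Gn.
exists (fun j x => G j x) => B hB.
case: (boolP [exists j, [forall c, [exists x in B, G j x == c]]]).
  case/existsP => j /forallP h; exists j => c.
  by case/existsP: (h c) => x /andP [xB /eqP e]; exists x.
rewrite negb_exists => /forallP hj.
have c0 : 'I_q := Ordinal q0.
pose cc := [ffun j => odflt c0 [pick c | [forall x in B, G j x != c]]].
have Gbad : G \in bad.
  apply/bigcupP; exists B; first by rewrite hB.
  apply/bigcupP; exists cc => //.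
  rewrite inE; apply/forallP => j; rewrite inE ffunE.
  case: pickP => [c hc //|none].
  have := hj j; rewrite negb_forall => /existsP [c].
  rewrite negb_exists => /forallP hx.
  have := none c; rewrite -[RHS]/false => /negbT/negP; case.
  apply/forallP => x; apply/implyP => xB.
  by have := hx x; rewrite xB.
by rewrite Gbad in Gn.
Qed.
End Count.

Lemma ffact_le_exp n k : n ^_ k <= n ^ k.
Proof.
elim: k => [|k IH]; first by rewrite ffactn0 expn0.
rewrite ffactnSr expnSr; apply: leq_mul => //; exact: leq_subr.
Qed.

Lemma bin_le_exp n k : 'C(n, k) <= n ^ k.
Proof.
apply: leq_trans (ffact_le_exp n k); rewrite -bin_ffact; apply: leq_pmulr.
exact: fact_gt0.
Qed.

Lemma bern_nat a n : a ^ n + n * a ^ n.-1 <= a.+1 ^ n.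
Proof.
elim: n => [|n IH]; first by rewrite !expn0 mul0n.
rewrite (expnS a.+1) /=.
have h : a.+1 * (a ^ n + n * a ^ n.-1) <= a.+1 * a.+1 ^ n by rewrite leq_mul2l IH orbT.
apply: leq_trans h.
case: n IH => [|n] IH /=; first by rewrite expn1 expn0; lia.
rewrite !expnS.
set b := a ^ n.
nia.
Qed.

Lemma two_pow q : 0 < q -> 2 * q.-1 ^ q <= q ^ q.
Proof.
case: q => [//|a] _ /=.
have h := bern_nat a a.+1.
apply: leq_trans h; rewrite mul2n -addnn leq_add2l /= expnS leq_mul2r.
by rewrite ltnW ?orbT.
Qed.

Lemma numeric d : 4 <= d ->
  'C((d ^ (d - 2)) ^ d, d ^ d + 1) * (d ^ (d - 2)) ^ (d ^ d * d ^ 3) *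
    (d ^ (d - 2)).-1 ^ ((d ^ d + 1) * (d ^ d * d ^ 3))
  < (d ^ (d - 2)) ^ ((d ^ d + 1) * (d ^ d * d ^ 3)).
Proof.
move=> d4.
have ha : d ^ d = d ^ (d - 2) * d ^ 2 by rewrite -expnD subnK //; lia.
set q := d ^ (d - 2) in ha *.
set a := d ^ d in ha *.
have hq1 : 1 < q.
  have : d ^ 1 <= d ^ (d - 2) by rewrite leq_exp2l; lia.
  rewrite expn1 /q; lia.
set K := a + 1.
set m := a * d ^ 3.
set t := K * d ^ 5.
have hKm : K * m = q * t by rewrite /m /t ha !expnS expn0; nia.
have s1 : 'C(q ^ d, K) <= q ^ (d * K) by rewrite expnM; apply: bin_le_exp.
have s2 : 2 ^ t * q.-1 ^ (K * m) <= q ^ (K * m).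
  have t0 : 0 < t by rewrite /t /K muln_gt0 expn_gt0; lia.
  rewrite hKm expnM -expnMn (expnM q) leq_exp2r //; apply: two_pow; lia.
have s3 : q ^ (d * K + m) < 2 ^ t.
  have h1 : q < 2 ^ (d * (d - 2)).
    rewrite expnM /q ltn_exp2r; last by lia.
    by apply: ltn_expl.
  apply: leq_trans (_ : (2 ^ (d * (d - 2))) ^ (d * K + m) <= 2 ^ t).
    by rewrite ltn_exp2r //; rewrite /K; lia.
  rewrite -expnM leq_exp2l // /t /K /m.
  rewrite !expnS expn0. clearbody a. clear -d4.
  have [e ->] : exists e, d = e + 2 by exists (d - 2); lia.
  rewrite addnK.
  nia.
have q0 : 0 < q by lia.
rewrite -(ltn_pmul2l (_ : 0 < 2 ^ t)); last by rewrite expn_gt0.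
apply: (@leq_ltn_trans (q ^ (d * K + m) * q ^ (K * m))).
  rewrite expnD mulnCA; apply: leq_mul => //; exact: leq_mul.
by rewrite ltn_pmul2r // expn_gt0 q0.
Qed.

Lemma sub_card (T : finType) (B : {set T}) k : k <= #|B| ->
  exists2 C : {set T}, C \subset B & #|C| = k.
Proof.
elim: k => [|k IH] hk; first by exists set0; [apply: sub0set | rewrite cards0].
have [C CB hC] := IH (ltnW hk).
have : 0 < #|B :\: C| by rewrite cardsD (setIidPr CB) hC; lia.
case/card_gt0P => x; rewrite inE => /andP [xC xB].
exists (x |: C); first by rewrite subUset sub1set xB CB.
by rewrite cardsU1 xC hC.
Qed.

Lemma clique_cover (d q : nat) (S : {set {ffun 'I_d -> 'I_q}}) : 0 < q -> 0 < d ->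
  (forall B : {set {ffun 'I_d -> 'I_q}}, B \subset S -> #|B| <= sJ setT B) ->
  exists h : 'I_d -> {ffun 'I_d -> option 'I_q} -> 'I_q,
    forall x, x \in S -> exists i, h i (pr i x) = x i.
Proof.
move=> q0 d0 hS.
pose N (x : {ffun 'I_d -> 'I_q}) := [set (i, pr i x) | i : 'I_d].
have hH : forall B : {set {ffun 'I_d -> 'I_q}}, B \subset S -> #|B| <= #|nbh N B|.
  move=> B sB; apply: leq_trans (hS B sB) _.
  have := @sum_card_le _ _ (nbh N B) (fun w => w.1) (fun i => [set (i, z) | z in pr i @: B]).
  have e : forall i, #|[set (i, z) | z in pr i @: B]| = #|pr i @: B|.
    by move=> i; apply: card_imset => z z' [].
  rewrite /sJ (eq_bigr _ (fun i _ => e i)).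
  have -> : \sum_(i in [set: 'I_d]) #|pr i @: B| = \sum_i #|pr i @: B|.
    by apply: eq_bigl => i; rewrite inE.
  apply; move=> i; apply/subsetP => w /imsetP [z /imsetP [x xB ->] ->].
  rewrite inE eqxx andbT; apply/bigcupP; exists x => //.
  by apply/imsetP; exists i.
have [f [fi fN]] := hall_gen (Ordinal d0, [ffun _ => None]) (k := #|S|) (leqnn _) hH.
exists (fun i z => if [pick x in S | f x == (i, z)] is Some x then x i else Ordinal q0).
move=> x xS.
have := fN x xS; case/imsetP => i _ e.
exists i; case: pickP => [x' /andP [x'S /eqP e']|none].
  by have -> : x' = x by apply: fi => //; rewrite e' e.
by have := none x; rewrite xS e eqxx.
Qed.


Lemma win_from_family (d q m : nat) (G : 'I_m -> {ffun 'I_d -> 'I_q} -> 'I_q) :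
  0 < q -> 0 < d ->
  (forall B : {set {ffun 'I_d -> 'I_q}}, #|B| = d ^ d + 1 ->
     exists j, forall c, exists2 x, x \in B & G j x = c) ->
  hat_winnable (book_adj d m) q.
Proof.
move=> q0 d0 hG.
pose S (y : {ffun 'I_m -> 'I_q}) := [set x : {ffun 'I_d -> 'I_q} | [forall j, G j x != y j]].
have hS : forall y (B : {set {ffun 'I_d -> 'I_q}}), B \subset S y -> #|B| <= sJ setT B.
  move=> y B sB.
  case: (leqP #|B| (d ^ d)) => hB; first exact: iso_full.
  have [C CB hC] := sub_card hB.
  have hC1 : #|C| = d ^ d + 1 by rewrite hC addn1.
  have [j hj] := hG C hC1.
  have [x xC e] := hj (y j).
  have : x \in S y by apply: (subsetP sB); apply: (subsetP CB).
  by rewrite inE => /forallP /(_ j); rewrite e eqxx.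
have hc : forall y, exists h : 'I_d -> {ffun 'I_d -> option 'I_q} -> 'I_q,
    forall x, x \in S y -> exists i, h i (pr i x) = x i.
  by move=> y; apply: clique_cover => //; apply: hS.
pose H y := proj1_sig (constructive_indefinite_description _ (hc y)).
have HP : forall y x, x \in S y -> exists i, H y i (pr i x) = x i.
  by move=> y; exact: (proj2_sig (constructive_indefinite_description _ (hc y))).
pose xof (c : ('I_d + 'I_m)%type -> 'I_q) := [ffun i => c (inl i)] : {ffun 'I_d -> 'I_q}.
pose yof (c : ('I_d + 'I_m)%type -> 'I_q) := [ffun j => c (inr j)] : {ffun 'I_m -> 'I_q}.
exists (fun v c => match v with inl i => H (yof c) i (pr i (xof c)) | inr j => G j (xof c) end).
split.
  move=> [i|j] c c' hcc /=.
    have e1 : yof c = yof c' by apply/ffunP => j; rewrite !ffunE; apply: hcc.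
    have e2 : pr i (xof c) = pr i (xof c').
      apply/ffunP => k; rewrite !ffunE; case: eqP => // /eqP nk.
      by rewrite hcc //= eq_sym.
    by rewrite e1 e2.
  have -> : xof c = xof c' by apply/ffunP => k; rewrite !ffunE; apply: hcc.
  done.
move=> c.
case: (boolP [exists j, G j (xof c) == yof c j]).
  case/existsP => j /eqP e; exists (inr j) => /=.
  by rewrite e ffunE.
rewrite negb_exists => /forallP hn.
have xS : xof c \in S (yof c) by rewrite inE; apply/forallP.
have [i hi] := HP _ _ xS.
by exists (inl i) => /=; rewrite hi ffunE.
Qed.

Theorem mainTheorem4 (d : nat) :
  1 <= d -> HG_ge (book_adj d (d ^ d * d ^ 3)) (d ^ d %/ d ^ 2).
Proof.
move=> d1.
exists (d ^ d %/ d ^ 2); split => //.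
case: (leqP 4 d) => d4.
  have ha : d ^ d = d ^ (d - 2) * d ^ 2 by rewrite -expnD subnK //; lia.
  have hq : d ^ d %/ d ^ 2 = d ^ (d - 2) by rewrite ha mulnK // expn_gt0; lia.
  have q0 : 0 < d ^ d %/ d ^ 2 by rewrite hq expn_gt0; lia.
  have hn := numeric d4.
  rewrite -hq in hn.
  have hn' : 'C(#|{ffun 'I_d -> 'I_(d ^ d %/ d ^ 2)}|, d ^ d + 1) *
      (d ^ d %/ d ^ 2) ^ (d ^ d * d ^ 3) * (d ^ d %/ d ^ 2).-1 ^ ((d ^ d + 1) * (d ^ d * d ^ 3))
      < (d ^ d %/ d ^ 2) ^ ((d ^ d + 1) * (d ^ d * d ^ 3)).
    by rewrite card_ffun !card_ord.
  have [G hG] := count_family q0 hn'.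
  by apply: (win_from_family (G := G)) => //; lia.
have q0 : 0 < d ^ d %/ d ^ 2.
  by case: d d1 d4 => [|[|[|[|]]]].
apply: (win_from_family (G := fun _ _ => Ordinal q0)) => //.
move=> B hB; exfalso.
have : #|B| <= #|{ffun 'I_d -> 'I_(d ^ d %/ d ^ 2)}| by apply: max_card.
rewrite card_ffun !card_ord hB.
by case: d d1 d4 {B hB q0} => [|[|[|[|]]]].
Qed.
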